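(* Let $N\ge 3$, write $N=2g+1$ or $N=2g+2$ with $g\ge 1$, and let $(v_n(x))_{n\in\mathbf Z}$ be a solution of the $N$-periodic dressing chain (see context). Let $T(\lambda)=\begin{pmatrix}A(\lambda)&B(\lambda)\\ C(\lambda)&D(\lambda)\end{pmatrix}$ be its transition matrix, $P(\lambda)=\operatorname{Tr}T(\lambda)$, $Q(\lambda)=\det T(\lambda)$. Suppose that, at the values of $x$ considered, the $g$ zeros $\lambda_1,\dots,\lambda_g$ of $B(\lambda)$ are pairwise distinct (and depend differentiably on $x$), and put $z_j=A(\lambda_j)$, assumed nonzero. Then for $j=1,\dots,g$, $$\dot\lambda_j=\frac{z_j-Q(\lambda_j)z_j^{-1}}{B'(\lambda_j)},\qquad \dot z_j=\frac{P'(\lambda_j)z_j-Q'(\lambda_j)}{B'(\lambda_j)},$$ where the dot denotes $d/dx$ and the prime denotes $\partial/\partial\lambda$.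
   Context: Fix constants $\alpha_1,\dots,\alpha_N$, extended $N$-periodically ($\alpha_{n+N}=\alpha_n$); put $\alpha=\sum_{n=1}^N\alpha_n$, $\beta_n=\alpha_1+\cdots+\alpha_n$, $\beta_0=0$. A solution of the $N$-periodic dressing chain is a family of functions $v_n(x)$, $n\in\mathbf Z$, with $v_{n+N}=v_n$ and $\dot v_n+\dot v_{n+1}=v_{n+1}^2-v_n^2+\alpha_n$ for all $n$. Put $v=v_1+\cdots+v_N$ (then $\dot v=\alpha/2$). Let $V_n(\lambda)=\begin{pmatrix}v_n&1\\ \lambda+v_n^2&v_n\end{pmatrix}$ and define the transition matrix $T(\lambda)=V_N(\lambda+\beta_{N-1})\cdots V_2(\lambda+\beta_1)V_1(\lambda)$. Then $Q(\lambda)=\det T(\lambda)=(-1)^N\lambda\prod_{n=1}^{N-1}(\lambda+\beta_n)$, and $B(\lambda)$ is a polynomial of degree $g$ with leading coefficient $b_0=1$ if $N=2g+1$ and $b_0=v$ if $N=2g+2$. *)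

(* Defs.v *)
From HB Require Import structures.
From mathcomp Require Import all_boot all_order all_algebra.
From mathcomp Require Import all_classical all_reals all_analysis.
Set Implicit Arguments. Unset Strict Implicit. Unset Printing Implicit Defensive.
Import Order.TTheory GRing.Theory Num.Theory.
Import numFieldNormedType.Exports.
Local Open Scope ring_scope.

Section Dressing.
Variable K : numFieldType.

Definition beta (alpha : nat -> K) (n : nat) : K := \sum_(1 <= k < n.+1) alpha k.

(* V_n(lambda + c) as a 2x2 matrix of polynomials in lambda, at the point x *)
Definition Vmat (v : nat -> K -> K) (n : nat) (c : K) (x : K) : 'M[{poly K}]_2 :=
  \matrix_(i < 2, j < 2)
    (if (i == 0%N :> nat) && (j == 0%N :> nat) then (v n x)%:P
     else if (i == 0%N :> nat) then 1
     else if (j == 0%N :> nat) then 'X + (c + v n x ^+ 2)%:P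
     else (v n x)%:P).

Fixpoint Tpart (alpha : nat -> K) (v : nat -> K -> K) (n : nat) (x : K)
  : 'M[{poly K}]_2 :=
  match n with
  | 0 => 1%:M
  | m.+1 => Vmat v m.+1 (beta alpha m) x *m Tpart alpha v m x
  end.

Definition Tmat (N : nat) alpha v x := Tpart alpha v N x.
Definition Apol N alpha v x : {poly K} := Tmat N alpha v x 0 0.
Definition Bpol N alpha v x : {poly K} := Tmat N alpha v x 0 1.
Definition Cpol N alpha v x : {poly K} := Tmat N alpha v x 1 0.
Definition Dpol N alpha v x : {poly K} := Tmat N alpha v x 1 1.
Definition Ppol N alpha v x : {poly K} := \tr (Tmat N alpha v x).
Definition Qpol N alpha v x : {poly K} := \det (Tmat N alpha v x).

Definition dressing_chain (N : nat) (alpha : nat -> K) (v : nat -> K -> K) :=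
  (forall n, alpha (n + N)%N = alpha n) /\
  (forall n, v (n + N)%N = v n) /\
  (forall n x, derivable (v n) x 1) /\
  (forall n x, derive1 (v n) x + derive1 (v n.+1) x
               = v n.+1 x ^+ 2 - v n x ^+ 2 + alpha n).

End Dressing.

(* Main.v *)
Require Import Defs.
From HB Require Import structures.
From mathcomp Require Import all_boot all_order all_algebra.
From mathcomp Require Import all_classical all_reals all_analysis.
From mathcomp Require Import ring zify.
Import Order.TTheory GRing.Theory Num.Theory.
Import numFieldNormedType.Exports.
Local Open Scope ring_scope.

Section PDs.
Variables (K : numFieldType) (x0 : K).

Definition PD (p : K -> {poly K}) (dp : {poly K}) :=
  forall k, is_derive x0 (1:K) (fun x => (p x)`_k) dp`_k.

Lemma PD_eq p dp dq : PD p dp -> dp = dq -> PD p dq.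
Proof. by move=> h <-. Qed.

Lemma PD_add p q dp dq : PD p dp -> PD q dq -> PD (fun x => p x + q x) (dp + dq).
Proof.
move=> hp hq k; rewrite coefD.
have -> : (fun x => (p x + q x)`_k) = (fun x => (p x)`_k) + (fun x => (q x)`_k).
  by apply/funext => x; rewrite coefD.
exact: is_deriveD.
Qed.

Lemma PD_sum n (F : 'I_n -> K -> {poly K}) dF :
  (forall i, PD (F i) (dF i)) -> PD (fun x => \sum_(i < n) F i x) (\sum_(i < n) dF i).
Proof.
move=> h k; rewrite coef_sum.
have -> : (fun x => (\sum_(i < n) F i x)`_k) = \sum_(i < n) (fun x => (F i x)`_k).
  by apply/funext => x; rewrite coef_sum fct_sumE.
apply: (@is_derive_sum _ _ _ n (fun i x => (F i x)`_k)) => i; exact: h.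
Qed.

Lemma PD_mul p q dp dq : PD p dp -> PD q dq ->
  PD (fun x => p x * q x) (dp * q x0 + p x0 * dq).
Proof.
move=> hp hq k; rewrite coefD !coefM -big_split /=.
have -> : (fun x => (p x * q x)`_k) =
   \sum_(j < k.+1) ((fun x => (p x)`_j) * (fun x => (q x)`_(k - j))).
  by apply/funext => x; rewrite coefM fct_sumE.
apply: is_derive_eq; first by apply: is_derive_sum => j; exact: is_deriveM.
apply: eq_bigr => j _ /=; rewrite /GRing.scale /=; ring.
Qed.

Lemma PD_cst p : PD (fun _ => p) 0.
Proof. by move=> k; rewrite coef0; exact: is_derive_cst. Qed.

Lemma PD_C (c : K -> K) dc : is_derive x0 (1:K) c dc -> PD (fun x => (c x)%:P) dc%:P.
Proof.
move=> h [|k]; rewrite coefC /=.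
  by have -> : (fun x => (c x)%:P`_0) = c by apply/funext => x; rewrite coefC.
have -> : (fun x => (c x)%:P`_k.+1) = cst 0 by apply/funext => x; rewrite coefC.
exact: is_derive_cst.
Qed.


Definition MPD (M : K -> 'M[{poly K}]_2) (dM : 'M[{poly K}]_2) :=
  forall i j, PD (fun x => M x i j) (dM i j).

Lemma MPD_eq M dM dN : MPD M dM -> dM = dN -> MPD M dN.
Proof. by move=> h <-. Qed.

Lemma MPD_mul M N dM dN : MPD M dM -> MPD N dN ->
  MPD (fun x => M x *m N x) (dM *m N x0 + M x0 *m dN).
Proof.
move=> hM hN i j.
have -> : (fun x => (M x *m N x) i j) = (fun x => \sum_(l < 2) M x i l * N x l j).
  by apply/funext => x; rewrite mxE.
apply: PD_eq; first by apply: PD_sum => l; apply: PD_mul.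
by rewrite !mxE -big_split.
Qed.


Lemma MPD_cst M : MPD (fun _ => M) 0.
Proof. by move=> i j; rewrite mxE; exact: PD_cst. Qed.

Variables (alpha : nat -> K) (v : nat -> K -> K).
Hypothesis vder : forall n x, derivable (v n) x 1.
Hypothesis chain : forall n x, derive1 (v n) x + derive1 (v n.+1) x
               = v n.+1 x ^+ 2 - v n x ^+ 2 + alpha n.

Definition vd n := 'D_1 (v n) x0.

Lemma chain0 n : alpha n = vd n + vd n.+1 - v n.+1 x0 ^+ 2 + v n x0 ^+ 2.
Proof. rewrite /vd -!derive1E chain; ring. Qed.

Lemma betaS n : beta alpha n.+1 = beta alpha n + alpha n.+1.
Proof. by rewrite /beta big_nat_recr. Qed.

Lemma beta0 : beta alpha 0 = 0.
Proof. by rewrite /beta big_geq. Qed.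

Definition Umat (m : nat) : 'M[{poly K}]_2 :=
  \matrix_(i < 2, j < 2)
    (if (i == 0%N :> nat) && (j == 0%N :> nat) then 0
     else if (i == 0%N :> nat) then 1
     else if (j == 0%N :> nat) then 'X + (beta alpha m.-1 + v m x0 ^+ 2 - vd m)%:P
     else 0).

Definition dVmat (m : nat) : 'M[{poly K}]_2 :=
  \matrix_(i < 2, j < 2)
    (if (i == 0%N :> nat) && (j == 0%N :> nat) then (vd m)%:P
     else if (i == 0%N :> nat) then 0
     else if (j == 0%N :> nat) then (v m x0 * vd m + v m x0 * vd m)%:P
     else (vd m)%:P).

Lemma MPD_V m c : MPD (fun x => Vmat v m c x) (dVmat m).
Proof.
have hv : is_derive x0 (1:K) (v m) (vd m) by apply: derivableP.
move=> i j.
have -> : (fun x => Vmat v m c x i j) = (fun x =>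
    (if (i == 0%N :> nat) && (j == 0%N :> nat) then (v m x)%:P
     else if (i == 0%N :> nat) then 1
     else if (j == 0%N :> nat) then 'X + (c + v m x ^+ 2)%:P
     else (v m x)%:P)) by apply/funext => x; rewrite mxE.
rewrite mxE; case: ifP => _; first exact: PD_C.
case: ifP => _; first exact: PD_cst.
case: ifP => _; last exact: PD_C.
have h2 : is_derive x0 (1:K) (fun x => c + v m x ^+ 2) (v m x0 * vd m + v m x0 * vd m).
  have -> : (fun x => c + v m x ^+ 2) = cst c + (v m * v m).
    by apply/funext => x; rewrite /= expr2.
  have := is_deriveD (is_derive_cst c x0 1) (is_deriveM hv hv).
  move=> H; apply: (is_derive_eq H).
  by rewrite add0r /GRing.scale /=.
have := @PD_add _ _ _ _ (PD_cst 'X) (@PD_C _ _ h2).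
by rewrite add0r.
Qed.

Lemma UmatE m (i j : 'I_2) : Umat m i j =
    (if (i == 0%N :> nat) && (j == 0%N :> nat) then 0
     else if (i == 0%N :> nat) then 1
     else if (j == 0%N :> nat) then 'X + (beta alpha m.-1 + v m x0 ^+ 2 - vd m)%:P
     else 0).
Proof. by rewrite mxE. Qed.

Lemma VmatE m c (i j : 'I_2) : Vmat v m c x0 i j =
    (if (i == 0%N :> nat) && (j == 0%N :> nat) then (v m x0)%:P
     else if (i == 0%N :> nat) then 1
     else if (j == 0%N :> nat) then 'X + (c + v m x0 ^+ 2)%:P
     else (v m x0)%:P).
Proof. by rewrite mxE. Qed.

Lemma dV_id n : dVmat n.+1 = Umat n.+2 *m Vmat v n.+1 (beta alpha n) x0
   - Vmat v n.+1 (beta alpha n) x0 *m Umat n.+1.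
Proof.
have mE : forall (A B : 'M[{poly K}]_2) i j, (A *m B) i j = \sum_k A i k * B k j.
  by move=> *; rewrite mxE.
have sE : forall (A B : 'M[{poly K}]_2) i j, (A - B) i j = A i j - B i j.
  by move=> *; rewrite !mxE.
have hU2 := UmatE n.+2; have hU1 := UmatE n.+1; have hV := VmatE n.+1 (beta alpha n).
move: hU2 hU1 hV; rewrite betaS chain0 /=.
move: (Umat n.+2) (Umat n.+1) (Vmat v n.+1 (beta alpha n) x0) => U2 U1 V hU2 hU1 hV.
apply/matrixP => i j.
rewrite [in LHS]mxE sE !mE !big_ord_recr !big_ord0 !hU2 !hU1 !hV.
case: i => [[|[|i]] Hi]; last by []; case: j => [[|[|j]] Hj]; try by [].
all: rewrite /= ?(polyCD, polyCM, polyCN, polyCB, polyC_exp); ring.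
Qed.


Lemma MPD_T n : MPD (fun x => Tpart alpha v n x)
   (Umat n.+1 *m Tpart alpha v n x0 - Tpart alpha v n x0 *m Umat 1).
Proof.
elim: n => [|n IH].
  apply: (@MPD_eq _ _ _ (MPD_cst 1%:M)).
  by rewrite /= mulmx1 mul1mx subrr.
have H := @MPD_mul _ _ _ _ (MPD_V n.+1 (beta alpha n)) IH.
set V := Vmat v n.+1 (beta alpha n) x0 in H *.
set T := Tpart alpha v n x0 in H IH *.
have E : dVmat n.+1 *m T + V *m (Umat n.+1 *m T - T *m Umat 1)
   = Umat n.+2 *m (V *m T) - (V *m T) *m Umat 1.
  by rewrite dV_id mulmxBl mulmxBr !mulmxA addrA subrK.
exact (@MPD_eq _ _ _ H E).
Qed.


Lemma mul2E (A B : 'M[{poly K}]_2) i j :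
  (A *m B) i j = A i 0 * B 0 j + A i 1 * B 1 j.
Proof.
rewrite mxE !big_ord_recr big_ord0 /= add0r.
by congr (_ * _ + _ * _); congr (_ _ _); apply/val_inj.
Qed.

Lemma size_lin (a b p q : {poly K}) n : ((size a + size p).-1 <= n)%N ->
  ((size b + size q).-1 <= n)%N -> (size (a * p + b * q)%R <= n)%N.
Proof.
move=> h1 h2; apply: leq_trans (size_add _ _) _.
by rewrite geq_max (leq_trans (size_mul_leq _ _) h1) (leq_trans (size_mul_leq _ _) h2).
Qed.

Lemma Tsize n x :
  [/\ (size (Tpart alpha v n x 0 0)%R <= n./2 + 1)%N,
      (size (Tpart alpha v n x 0 1)%R <= n.+1./2)%N,
      (size (Tpart alpha v n x 1 0)%R <= n.+1./2 + 1)%N &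
      (size (Tpart alpha v n x 1 1)%R <= n./2 + 1)%N].
Proof.
elim: n => [|n [h00 h01 h10 h11]].
  by rewrite /= !mxE /= size_poly1 size_poly0.
have sC : forall c : K, (size c%:P <= 1)%N by move=> c; exact: size_polyC_leq1.
have sX : forall c : K, size ('X + c%:P) = 2%N by move=> c; exact: size_XaddC.
have s1 : size (1 : {poly K}) = 1%N by exact: size_poly1.
rewrite /= !mul2E !mxE /=.
split; apply: size_lin; rewrite ?sX ?s1.
all: move: (sC (v n.+1 x)) h00 h01 h10 h11; rewrite ?uphalfE -?subn1; lia.
Qed.



Lemma is_derive_uniq (f : K -> K) df dg :
  is_derive x0 (1:K) f df -> is_derive x0 (1:K) f dg -> df = dg.
Proof. by move=> [_ <-] [_ <-]. Qed.

Lemma PD_eval p dp n (l : K -> K) dl :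
  PD p dp -> (forall x, size (p x) <= n)%N -> is_derive x0 (1:K) l dl ->
  is_derive x0 (1:K) (fun x => (p x).[l x]) (dp.[l x0] + (p x0)^`().[l x0] * dl).
Proof.
move=> hp hs hl.
have sdp : (size dp <= n)%N.
  apply/leq_sizeP => k hk.
  have E : (fun x => (p x)`_k) = cst 0.
    by apply/funext => x; apply: (leq_sizeP _ _ (hs x)).
  have h := hp k; rewrite E in h.
  rewrite -(@derive_val _ _ _ _ _ _ _ h); exact: derive_cst.
set p0 := p x0; set l0 := l x0.
have sd : (size p0^`() <= n)%N.
  apply/leq_sizeP => k hk; rewrite coef_deriv.
  by rewrite (leq_sizeP _ _ (hs x0)) ?mul0rn // ltnW.
have D1 : \sum_(i < n) p0`_i * (i%:R * l0 ^+ i.-1) = (p0^`()).[l0].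
  rewrite (horner_coef_wide _ sd).
  have <- : \sum_(i < n.+1) p0`_i * (i%:R * l0 ^+ i.-1) =
            \sum_(i < n) p0`_i * (i%:R * l0 ^+ i.-1).
    by rewrite big_ord_recr /= (leq_sizeP _ _ (hs x0)) // mul0r addr0.
  rewrite big_ord_recl /= mulr0n mul0r mulr0 add0r.
  apply: eq_bigr => i _; rewrite coef_deriv /bump /= add1n add0n -mulr_natr; ring.
have E : (fun x => (p x).[l x]) = \sum_(i < n) (fun x => (p x)`_i * l x ^+ i).
  by apply/funext => x; rewrite (horner_coef_wide _ (hs x)) fct_sumE.
rewrite E.
have H : forall i : 'I_n, is_derive x0 (1:K) (fun x => (p x)`_i * l x ^+ i)
    (p0`_i * ((i%:R * l0 ^+ i.-1) * dl) + l0 ^+ i * dp`_i).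
  move=> i.
  have := is_deriveM (hp i) (is_deriveX i hl).
  by rewrite exprfctE.
have HS := @is_derive_sum _ _ _ n (fun i x => (p x)`_i * l x ^+ i) x0 1 _ H.
apply: (is_derive_eq HS).
rewrite big_split /= (horner_coef_wide _ sdp) -D1 big_distrl /=.
rewrite addrC; congr (_ + _); apply: eq_bigr => i _; ring.
Qed.


Lemma UT01 m (M : 'M[{poly K}]_2) :
  (Umat m *m M - M *m Umat 1) 0 1 = M 1 1 - M 0 0.
Proof.
have hU2 := UmatE m; have hU1 := UmatE 1.
move: (Umat m) (Umat 1) hU2 hU1 => U2 U1 hU2 hU1.
rewrite !mxE !big_ord_recr !big_ord0 /= !add0r !hU2 !hU1 /=.
have -> : widen_ord (leqnSn 1) ord_max = 0 :> 'I_2 by apply/val_inj.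
have -> : ord_max = 1 :> 'I_2 by apply/val_inj.
by rewrite mul0r add0r mul1r mulr1 mulr0 addr0.
Qed.

Lemma UT00 m (M : 'M[{poly K}]_2) :
  (Umat m *m M - M *m Umat 1) 0 0 = M 1 0 - M 0 1 * Umat 1 1 0.
Proof.
have hU2 := UmatE m; have hU1 := UmatE 1.
have -> : Umat 1 1 0 = 'X + (beta alpha 0 + v 1 x0 ^+ 2 - vd 1)%:P by rewrite hU1.
move: (Umat m) (Umat 1) hU2 hU1 => U2 U1 hU2 hU1.
rewrite !mxE !big_ord_recr !big_ord0 /= !add0r !hU2 !hU1 /=.
have -> : widen_ord (leqnSn 1) ord_max = 0 :> 'I_2 by apply/val_inj.
have -> : ord_max = 1 :> 'I_2 by apply/val_inj.
by rewrite mul0r add0r mul1r mulr0 add0r.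
Qed.

End PDs.

Lemma det2 (R : comRingType) (M : 'M[R]_2) : \det M = M 0 0 * M 1 1 - M 0 1 * M 1 0.
Proof.
rewrite (expand_det_row _ 0) !big_ord_recr big_ord0 /= add0r /cofactor !det_mx11 !mxE /=.
have -> : widen_ord (leqnSn 1) ord_max = 0 :> 'I_2 by apply/val_inj.
have -> : ord_max = 1 :> 'I_2 by apply/val_inj.
have -> : lift 0 0 = 1 :> 'I_2 by apply/val_inj.
have -> : lift 1 0 = 0 :> 'I_2 by apply/val_inj.
rewrite expr0 expr1; ring.
Qed.

Lemma tr2 (R : comRingType) (M : 'M[R]_2) : \tr M = M 0 0 + M 1 1.
Proof.
rewrite /mxtrace !big_ord_recr big_ord0 /= add0r.
have -> : widen_ord (leqnSn 1) ord_max = 0 :> 'I_2 by apply/val_inj.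
by have -> : ord_max = 1 :> 'I_2 by apply/val_inj.
Qed.

Lemma deriv_root_simple (F : fieldType) (B : {poly F}) g (r : 'I_g -> F) j :
  B != 0 -> (size B <= g.+1)%N -> injective r -> (forall k, root B (r k)) ->
  B^`().[r j] != 0.
Proof.
move=> B0 sB inj hr.
have /factor_theorem [q Bq] := hr j.
have q0 : q != 0 by apply: contraNneq B0 => q0; rewrite Bq q0 mul0r.
have sq : (size q <= g)%N.
  by move: sB; rewrite Bq size_Mmonic ?monicXsubC // size_XsubC addn2.
rewrite Bq derivM derivXsubC mulr1 !hornerE subrr mulr0 add0r.
apply/negP => /eqP qj.
have : (size (map r (enum 'I_g)) < size q)%N.
  apply: max_poly_roots => //.
    apply/allP => _ /mapP [k _ ->].
    have [->|kj] := eqVneq k j; first by rewrite /root qj.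
    have := hr k; rewrite Bq /root hornerM hornerXsubC mulf_eq0 subr_eq0.
    by rewrite (inj_eq inj) (negbTE kj) orbF.
  by rewrite map_inj_uniq ?enum_uniq.
by rewrite size_map size_enum_ord ltnNge sq.
Qed.

Theorem mainTheorem1 (K : numFieldType) (N : nat) (alpha : nat -> K)
  (v : nat -> K -> K) (lam : 'I_((N.-1)./2) -> K -> K) (x0 : K) :
  (3 <= N)%N ->
  dressing_chain N alpha v ->
  Bpol N alpha v x0 != 0 ->
  (forall j, \forall x \near x0, (Bpol N alpha v x).[lam j x] = 0) ->
  (forall j, derivable (lam j) x0 1) ->
  injective (fun j => lam j x0) ->
  (forall j, (Apol N alpha v x0).[lam j x0] != 0) ->
  forall j,
    let l := lam j x0 in
    let z := (Apol N alpha v x0).[l] in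
    let dB := (deriv (Bpol N alpha v x0)).[l] in
    is_derive x0 1 (lam j)
      ((z - (Qpol N alpha v x0).[l] / z) / dB) /\
    is_derive x0 1 (fun x => (Apol N alpha v x).[lam j x])
      (((deriv (Ppol N alpha v x0)).[l] * z - (deriv (Qpol N alpha v x0)).[l]) / dB).
Proof.
move=> hN [_ [_ [vder chain]]] hB0 hroot hlam hinj hA j; cbv zeta.
have hT := @MPD_T K x0 alpha v vder chain N.
have sE : forall (M1 M2 : 'M[{poly K}]_2) i j, (M1 - M2) i j = M1 i j - M2 i j.
  by move=> *; rewrite !mxE.
have hBd : PD K x0 (fun x => Bpol N alpha v x)
    (Tpart alpha v N x0 1 1 - Tpart alpha v N x0 0 0).
  by have := hT 0 1; rewrite UT01.
have hAd : PD K x0 (fun x => Apol N alpha v x)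
    (Tpart alpha v N x0 1 0 - Tpart alpha v N x0 0 1 * Umat K x0 alpha v 1 1 0).
  by have := hT 0 0; rewrite UT00.
have hsB : forall x, (size (Bpol N alpha v x) <= N.+1./2)%N.
  by move=> x; case: (@Tsize K alpha v N x).
have hsA : forall x, (size (Apol N alpha v x) <= N./2 + 1)%N.
  by move=> x; case: (@Tsize K alpha v N x).
have hl := derivableP (hlam j).
set dl := 'D_1 (lam j) x0 in hl.
have H1 := @PD_eval K x0 _ _ _ _ _ hBd hsB hl.
have H2 := @PD_eval K x0 _ _ _ _ _ hAd hsA hl.
have H1' := @near_eq_is_derive _ _ _ (fun x => (Bpol N alpha v x).[lam j x])
   (fun _ => 0) x0 1 _ (hroot j) H1.
have e1 := @is_derive_uniq K x0 _ _ _ H1' (is_derive_cst (0:K) x0 1).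
have hBl : (Bpol N alpha v x0).[lam j x0] = 0 := nbhs_singleton (hroot j).
have hdB : (Bpol N alpha v x0)^`().[lam j x0] != 0.
  apply: (@deriv_root_simple _ _ _ (fun k => lam k x0)) => //.
    apply: leq_trans (hsB x0) _; move: hN; rewrite -subn1; lia.
  by move=> k; apply/eqP; exact: (nbhs_singleton (hroot k)).
have hAl := hA j.
move: H2 e1 hBl hdB hAl; rewrite /Apol /Bpol /Qpol /Ppol /Tmat det2 tr2.
set A := Tpart alpha v N x0 0 0; set B := Tpart alpha v N x0 0 1.
set C := Tpart alpha v N x0 1 0; set D := Tpart alpha v N x0 1 1.
set c1 := Umat K x0 alpha v 1 1 0.
set l := lam j x0 => H2 e1 hBl hdB hAl.
have e2 : B^`().[l] * dl = A.[l] - D.[l].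
  apply/eqP; rewrite -subr_eq0; apply/eqP; rewrite -e1 hornerD hornerN; ring.
have edl : dl = (A.[l] - D.[l]) / B^`().[l].
  by rewrite -e2 [_ * dl]mulrC mulfK.
split.
  apply: (is_derive_eq hl); rewrite edl !hornerE hBl.
  by field; rewrite hdB hAl.
apply: (is_derive_eq H2); rewrite edl !derivD !derivN !derivM !(hornerD, hornerN, hornerM) hBl.
by field; rewrite hdB.
Qed.
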